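(* Let $G=(V,E)$ be a finite simple connected graph with $n=|V|$ vertices and graph distance $d$, and let $\omega\colon V\to(0,\infty)$ be a weight function with total weight $\omega=\omega(V)$. Let $\delta>0$ and $s=\frac{8\ln n}{\delta^2}$. Let $S=\{m_1,\dots,m_s\}$ be a random sample (multiset) of $s$ vertices, drawn independently with $\Pr(m_i=v)=\omega(v)/\omega$, and let $\Phi^{*}(v)=\sum_{u\in S}d(u,v)$. Let $q^{*}=\arg\min_{v\in V}\Phi^{*}(v)$. Then, with probability at least $1-n^{-3}$, $q^{*}$ is $\delta$-close to a median, i.e. $\Lambda(q^{*})\le(\frac12+\delta)\omega$.
   Context: For vertices $q,v$, a vertex $u$ is consistent with $(q,v)$ if $q=v=u$, or $q\ne v$ and $v$ lies on a shortest path between $u$ and $q$; $N(q,v)$ is the set of such $u$. $N(q)$ is the neighbor set of $q$. For $X\subseteq V$, $\omega(X)=\sum_{u\in X}\omega(u)$. $\Lambda(v)=\max_{u\in N(v)}\omega(N(v,u))$. A vertex $q$ is $\delta$-close to a median if $\Lambda(q)\le(\frac12+\delta)\omega(V)$. *)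

(* Defs.v *)
From mathcomp Require Import all_boot all_order all_algebra.
From mathcomp Require Import all_classical all_reals all_analysis.
Set Implicit Arguments. Unset Strict Implicit. Unset Printing Implicit Defensive.
Import Order.TTheory GRing.Theory Num.Theory.
Local Open Scope ring_scope.

Section Graph.
Variable V : finType.
Variable e : rel V.

Definition simple_graph := symmetric e /\ irreflexive e.
Definition connected_graph := forall u v : V, connect e u v.

Definition walkb (k : nat) (u v : V) : bool :=
  [exists p : k.-tuple V, path e u p && (last u p == v)].

(* graph distance: least k such that a walk of length k from u to v exists
   (in a connected graph this is < #|V|) *)
Definition dist (u v : V) : nat :=
  find (fun k => walkb k u v) (iota 0 #|V|).

Definition consistent (q v u : V) : bool :=
  ((q == v) && (v == u)) ||
  ((q != v) && (dist u q == (dist u v + dist v q)%N)).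

Variable R : realType.
Variable w : V -> R.

Definition wsum (X : {set V}) : R := \sum_(u in X) w u.
Definition Wtot : R := wsum [set: V].

Definition Lambda (v : V) : R :=
  \big[Order.max/0]_(u | e v u) wsum [set x | consistent v u x].

Definition delta_close (delta : R) (q : V) : Prop :=
  Lambda q <= (2^-1 + delta) * Wtot.

Definition Phi (s : nat) (S : {ffun 'I_s -> V}) (v : V) : nat :=
  (\sum_(i < s) dist (S i) v)%N.

Definition good_sample (delta : R) (s : nat) (S : {ffun 'I_s -> V}) : bool :=
  [forall q : V, [forall v : V, (Phi S q <= Phi S v)%N] ==>
                 (Lambda q <= (2^-1 + delta) * Wtot)].

(* probability of an event under s i.i.d. draws with Pr(m_i = v) = w v / W *)
Definition sample_prob (s : nat) (P : {ffun 'I_s -> V} -> bool) : R :=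
  \sum_(S : {ffun 'I_s -> V} | P S) \prod_(i < s) (w (S i) / Wtot).

End Graph.

(* Main.v *)
Require Import Defs.
From mathcomp Require Import all_boot all_order all_algebra.
From mathcomp Require Import all_classical all_reals all_analysis.
From mathcomp Require Import zify ring lra.
Import Order.TTheory GRing.Theory Num.Theory.
Local Open Scope ring_scope.
Set Implicit Arguments. Unset Strict Implicit.
Section G.
Variables (V : finType) (e : rel V).

Lemma dist_le u v : (dist e u v <= #|V|)%N.
Proof. by rewrite /dist -[X in (_ <= X)%N](size_iota 0 #|V|) find_size. Qed.

Lemma dist_min k u v : (k < #|V|)%N -> walkb e k u v -> (dist e u v <= k)%N.
Proof.
move=> hk hw; rewrite leqNgt; apply/negP => h.
by have := before_find 0%N h; rewrite nth_iota // add0n hw.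
Qed.

Lemma dist_walk u v : (dist e u v < #|V|)%N -> walkb e (dist e u v) u v.
Proof.
move=> h; have: has (fun k => walkb e k u v) (iota 0 #|V|) by rewrite has_find size_iota.
move=> /(nth_find 0%N); by rewrite nth_iota ?add0n.
Qed.

Lemma walk_ext k x q v : walkb e k x q -> e q v -> walkb e k.+1 x v.
Proof.
move=> /existsP [p /andP [hp /eqP hl]] hqv; apply/existsP.
exists [tuple of rcons p v].
by rewrite /= rcons_path hp hl hqv last_rcons eqxx.
Qed.

Lemma dist_tri x q v : e q v -> (dist e x v <= (dist e x q).+1)%N.
Proof.
move=> hqv; case: (ltnP (dist e x q) #|V|) => h.
  have hw := walk_ext (dist_walk h) hqv.
  case: (ltnP (dist e x q).+1 #|V|) => h2; first exact: dist_min.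
  exact: leq_trans (dist_le _ _) h2.
by apply: leq_trans (dist_le _ _) _; apply: leq_trans h _.
Qed.

Lemma dist_pos v q : v != q -> (0 < dist e v q)%N.
Proof.
move=> hne; rewrite lt0n; apply/negP => /eqP h0.
have hV : (0 < #|V|)%N by apply/card_gt0P; exists v.
have := @dist_walk v q; rewrite h0 => /(_ hV) /existsP [p /andP [_ /eqP hl]].
by move: hl; rewrite (size0nil (size_tuple p)) /= => hl; rewrite hl eqxx in hne.
Qed.

Lemma consistent_lt q v x : v != q -> consistent e q v x ->
  (dist e x v < dist e x q)%N.
Proof.
move=> hne; rewrite /consistent eq_sym (negbTE hne) /= => /eqP ->.
by rewrite -addn1 leq_add2l dist_pos.
Qed.
End G.

Lemma sum_bool_card (s : nat) (b : 'I_s -> bool) :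
  (\sum_(i < s) (b i : nat))%N = #|[set i | b i]|.
Proof.
rewrite -sum1_card [in RHS]big_mkcond /=; apply: eq_bigr => i _; rewrite inE.
by case: (b i).
Qed.

Lemma minimizer_count (V : finType) (e : rel V) (s : nat) (S : {ffun 'I_s -> V})
  (q u : V) : e q u -> q != u -> (forall v, Phi e S q <= Phi e S v)%N ->
  (2 * #|[set i | consistent e q u (S i)]| <= s)%N.
Proof.
move=> hqu hne hmin.
have hne' : u != q by rewrite eq_sym.
have key : (Phi e S u + 2 * #|[set i | consistent e q u (S i)]| <= Phi e S q + s)%N.
  rewrite -sum_bool_card /Phi big_distrr /= -big_split /=.
  rewrite -[X in (_ <= _ + X)%N]card_ord -sum1_card -big_split /=.
  apply: leq_sum => i _.
  case hc: (consistent e q u (S i)) => /=.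
    have := consistent_lt hne' hc; lia.
  have := dist_tri (S i) hqu; lia.
have := hmin u; lia.
Qed.

Section Prob.
Variables (V : finType) (R : realType) (w : V -> R) (s : nat).
Hypothesis wpos : forall v, 0 < w v.
Hypothesis Vpos : (0 < #|V|)%N.

Lemma Wtot_sum : Wtot w = \sum_v w v.
Proof. by rewrite /Wtot /wsum; apply: eq_bigl => v; rewrite inE. Qed.

Lemma Wtot_gt0 : 0 < Wtot w.
Proof.
rewrite Wtot_sum; have [v _] : exists v : V, true by apply/card_gt0P: Vpos; exists v.
rewrite (bigD1 v) //=; apply: ltr_pwDl => //; apply: sumr_ge0 => i _; exact: ltW.
Qed.

Definition pi (S : {ffun 'I_s -> V}) := \prod_(i < s) (w (S i) / Wtot w).

Lemma pi_ge0 S : 0 <= pi S.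
Proof.
apply: prodr_ge0 => i _; apply: divr_ge0; [exact: ltW | exact: ltW Wtot_gt0].
Qed.

Lemma prod_sum (F : V -> R) :
  \sum_(S : {ffun 'I_s -> V}) \prod_(i < s) F (S i) = (\sum_v F v) ^+ s.
Proof.
by rewrite -(bigA_distr_bigA (fun (i : 'I_s) (v : V) => F v)) /= prodr_const card_ord.
Qed.

Lemma total : \sum_S pi S = 1.
Proof.
rewrite /pi (prod_sum (fun v => w v / Wtot w)) -mulr_suml -Wtot_sum divff ?expr1n //.
exact: lt0r_neq0 Wtot_gt0.
Qed.

Lemma sample_prob_le (P Q : pred {ffun 'I_s -> V}) :
  (forall S, P S -> Q S) -> sample_prob w P <= sample_prob w Q.
Proof.
move=> hPQ; rewrite /sample_prob [X in _ <= X](bigID P) /=.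
have -> : \sum_(i | Q i && P i) pi i = \sum_(i | P i) pi i.
  by apply: eq_bigl => S; case hp: (P S); rewrite ?andbT ?andbF // hPQ.
by rewrite lerDl; apply: sumr_ge0 => S _; exact: pi_ge0.
Qed.

Lemma sum_sub_le (T : finType) (P : pred T) (F : T -> R) :
  (forall x, 0 <= F x) -> \sum_(x | P x) F x <= \sum_x F x.
Proof.
move=> hF; rewrite [X in _ <= X](bigID P) /= lerDl.
by apply: sumr_ge0 => x _; exact: hF.
Qed.

Lemma chernoff (delta : R) (A : {set V}) : 0 < delta ->
  (2^-1 + delta) * Wtot w <= wsum w A ->
  sample_prob w (fun S : {ffun 'I_s -> V} => (2 * #|[set i | S i \in A]| <= s)%N)
  <= expR (- (2 * delta ^+ 2)) ^+ s.
Proof.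
move=> hd hA.
have hW := Wtot_gt0.
set a : R := 1 + 2 * delta.
have ha1 : 1 <= a by rewrite /a; lra.
have ha0 : a != 0 by rewrite /a; apply: lt0r_neq0; lra.
pose g v := if v \in A then a^-1 else a.
have hg0 : forall v, 0 <= g v.
  by move=> v; rewrite /g; case: (v \in A); [rewrite invr_ge0|]; lra.
pose f := \sum_v (w v / Wtot w * g v).
have step1 : sample_prob w (fun S : {ffun 'I_s -> V} => (2 * #|[set i | S i \in A]| <= s)%N)
    <= \sum_S (pi S * \prod_(i < s) g (S i)).
  apply: le_trans (@sum_sub_le _ (fun S : {ffun 'I_s -> V} =>
                       (2 * #|[set i | S i \in A]| <= s)%N) _ _); last first.
    by move=> S; apply: mulr_ge0; [exact: pi_ge0 | apply: prodr_ge0 => i _].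
  apply: ler_sum => S hS; apply: ler_peMr; first exact: pi_ge0.
  rewrite (bigID (fun i => S i \in A)) /=.
  have -> : \prod_(i < s | S i \in A) g (S i) = a^-1 ^+ #|[set i | S i \in A]|.
    rewrite -prodr_const; apply: eq_big => i; first by rewrite inE.
    by move=> hi; rewrite /g hi.
  have -> : \prod_(i < s | S i \notin A) g (S i) = a ^+ #|~: [set i | S i \in A]|.
    rewrite -prodr_const; apply: eq_big => i; first by rewrite !inE.
    by move=> /negbTE hi; rewrite /g hi.
  move: hS; set k := #|[set i | S i \in A]| => hS.
  have hc := cardsC [set i | S i \in A]; rewrite card_ord -/k in hc.
  set m := #|~: _| in hc *.
  have -> : m = (k + (m - k))%N by lia.
  rewrite exprD mulrA exprVn mulVf ?mul1r; first exact: exprn_ege1.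
  exact: expf_neq0.
have step2 : \sum_S (pi S * \prod_(i < s) g (S i)) = f ^+ s.
  rewrite -(prod_sum (fun v => w v / Wtot w * g v)); apply: eq_bigr => S _.
  by rewrite /pi -big_split.
have hf0 : 0 <= f.
  apply: sumr_ge0 => v _; apply: mulr_ge0 => //; apply: divr_ge0; exact: ltW.
have hf1 : f <= 1 - 2 * delta ^+ 2.
  rewrite /f (bigID (fun v => v \in A)) /=.
  rewrite (eq_bigr (fun v => w v / Wtot w * a^-1)); last by move=> v hv; rewrite /g hv.
  rewrite [X in _ + X <= _](eq_bigr (fun v => w v / Wtot w * a)); last first.
    by move=> v /negbTE hv; rewrite /g hv.
  rewrite -!mulr_suml.
  set Wa := \sum_(v in A) w v.
  set Wc := \sum_(v | v \notin A) w v.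
  have hsum : Wa + Wc = Wtot w by rewrite Wtot_sum (bigID (fun v => v \in A)).
  have hWa : wsum w A = Wa by [].
  set b := a^-1.
  have hb : a * b = 1 by rewrite /b divff.
  have hb0 : 0 < b by rewrite /b invr_gt0; lra.
  set p := Wa / Wtot w.
  have hp : 2^-1 + delta <= p by rewrite /p ler_pdivlMr // -hWa.
  have hq : Wc / Wtot w = 1 - p.
    rewrite /p -hsum; field; rewrite hsum; exact: lt0r_neq0.
  rewrite hq.
  have h1 : b <= a by rewrite /a in hb *; nra.
  have h2 : 0 <= (p - 2^-1 - delta) * (a - b) by apply: mulr_ge0; lra.
  rewrite /a in hb h2 h1 *; nra.
have hfe : f <= expR (- (2 * delta ^+ 2)).
  apply: le_trans hf1 _; have := expR_ge1Dx (- (2 * delta ^+ 2)); lra.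
apply: le_trans step1 _; rewrite step2; apply: lerXn2r => //; rewrite nnegrE //; apply: ltW; exact: expR_gt0.
Qed.
End Prob.

Theorem corollary5 (V : finType) (e : rel V) (R : realType) (w : V -> R)
  (delta : R) (s : nat) :
  simple_graph e -> connected_graph e -> (0 < #|V|)%N ->
  (forall v, 0 < w v) ->
  0 < delta ->
  (s%:R - 1 < 8 * ln (#|V|%:R) / delta ^+ 2 <= s%:R) ->
  sample_prob w (good_sample e w delta (s:=s)) >= 1 - (#|V|%:R) ^- 3.
Proof.
move=> [hsym hirr] _ hV hw hd /andP [_ hs2].
set n : R := #|V|%:R.
have hn0 : 0 < n by rewrite /n ltr0n.
have hn1 : 1 <= n by rewrite /n ler1n.
set c := (2^-1 + delta) * Wtot w.
have hW := Wtot_gt0 hw hV.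
have hc0 : 0 <= c by apply: mulr_ge0; [lra | exact: ltW].
set B : R := n ^- 5.
have hB0 : 0 <= B by rewrite /B invr_ge0; apply: exprn_ge0; exact: ltW.
have hbound : forall A : {set V}, c <= wsum w A ->
    sample_prob w (fun S : {ffun 'I_s -> V} => (2 * #|[set i | S i \in A]| <= s)%N) <= B.
  move=> A hA; apply: le_trans (chernoff s hw hV hd hA) _.
  have hln := ln_ge0 hn1.
  have hs : 8 * ln n <= s%:R * delta ^+ 2.
    by rewrite -ler_pdivrMr // exprn_gt0.
  rewrite -expRM_natl /B.
  have hnE : n = expR (ln n) by rewrite lnK // posrE.
  rewrite [in X in _ <= X]hnE -expRM_natl -expRN ler_expR; nra.
pose N q u := [set x | consistent e q u x].
pose E q u (S : {ffun 'I_s -> V}) :=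
  (e q u && (c < wsum w (N q u))) && (2 * #|[set i | S i \in N q u]| <= s)%N.
have hbad : forall S : {ffun 'I_s -> V}, ~~ good_sample e w delta S ->
    exists q u, E q u S.
  move=> S /forallPn [q]; rewrite negb_imply => /andP [/forallP hmin hL].
  have [u /andP [hqu hlt]] : exists u, e q u && (c < wsum w (N q u)).
    apply/existsP; apply: contraNT hL => /existsPn h.
    apply: bigmax_le => // u hqu; have := h u; rewrite hqu /= -leNgt //.
  exists q, u; rewrite /E hqu hlt /=.
  have hne : q != u by apply: contraTneq hqu => ->; rewrite hirr.
  have := minimizer_count (S:=S) hqu hne (fun v => hmin v).
  suff -> : #|[set i | S i \in N q u]| = #|[set i | consistent e q u (S i)]| by [].
  by apply: eq_card => i; rewrite !inE.
have hP : sample_prob w (fun S : {ffun 'I_s -> V} => ~~ good_sample e w delta S) <= n ^+ 2 * B.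
  have hstep : sample_prob w (fun S : {ffun 'I_s -> V} => ~~ good_sample e w delta S) <=
      \sum_(S : {ffun 'I_s -> V} | ~~ good_sample e w delta S)
      \sum_q \sum_u (if E q u S then pi w S else 0).
    rewrite /sample_prob; apply: ler_sum => S hS; have [q [u hE]] := hbad S hS.
    rewrite (bigD1 q) //= (bigD1 u) //= hE.
    have h1 : 0 <= \sum_(j | j != u) (if E q j S then pi w S else 0).
      by apply: sumr_ge0 => j _; case: ifP => _ //; exact: pi_ge0.
    have h2 : 0 <= \sum_(i | i != q) \sum_j (if E i j S then pi w S else 0).
      apply: sumr_ge0 => i _; apply: sumr_ge0 => j _.
      by case: ifP => _ //; exact: pi_ge0.
    rewrite -/(pi w S); lra.
  apply: le_trans hstep _.
  apply: le_trans (sum_sub_le _ _) _.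
    move=> S; apply: sumr_ge0 => i _; apply: sumr_ge0 => j _.
    by case: ifP => _ //; exact: pi_ge0.
  rewrite exchange_big /=.
  have hfin : \sum_(q : V) \sum_(u : V) B = n ^+ 2 * B.
    by rewrite !sumr_const -mulrnA -mulr_natl natrM -expr2 cardT -cardE.
  rewrite -hfin.
  apply: ler_sum => q _; rewrite exchange_big /=; apply: ler_sum => u _.
  rewrite -big_mkcond /=.
  case hcond : (e q u && (c < wsum w (N q u))).
    move: hcond => /andP [_ hlt].
    apply: le_trans (hbound (N q u) (ltW hlt)).
    apply: (sample_prob_le hw hV) => S; rewrite /E => /andP [] //.
  by rewrite big_pred0 // => S; rewrite /E hcond.
have htot := total s hw hV.
rewrite (bigID (good_sample e w delta (s:=s))) /= in htot.
have -> : sample_prob w (good_sample e w delta (s:=s)) =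
   1 - sample_prob w (fun S : {ffun 'I_s -> V} => ~~ good_sample e w delta S).
  by rewrite -htot /sample_prob addrK.
have hB3 : n ^+ 2 * B = n ^- 3.
  have hn2 : n ^+ 2 != 0 by apply: expf_neq0; exact: lt0r_neq0.
  by rewrite /B (_ : 5 = 2 + 3)%N // exprD invfM mulrA divff ?mul1r.
rewrite hB3 in hP; lra.
Qed.
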